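(* Let $E=\mathbb{R}^n$ with the Euclidean norm $\|\cdot\|_2$ and prox-function $d(x)=\frac12\|x\|_2^2$ (so $\psi_0(x)=\frac12\|x-x^0\|_2^2$). Let $f$ be convex and $L$-smooth with a minimizer $x_*$, and set $R=\|x^0-x_*\|_2$. For the iterates of Algorithm AGMsDR and $k\ge1$ define $$\hat f^k=\min_{x:\,\|x-x^0\|_2\le R}\ \frac{1}{A_k}\sum_{i=0}^{k-1}a_{i+1}\big\{f(y^i)+\langle\nabla f(y^i),x-y^i\rangle\big\}.$$ Then $\hat f^k\le f(x_* )$ and $f(x^k)-\hat f^k\le\frac{R^2}{2A_k}$; in particular $f(x^k)-f(x_* )\le f(x^k)-\hat f^k\le\frac{R^2}{2A_k}$.
   Context: A function $f:\mathbb{R}^n\to\mathbb{R}$ is $L$-smooth ($L>0$) if it is continuously differentiable and $\|\nabla f(x)-\nabla f(y)\|_2\le L\|x-y\|_2$ for all $x,y$. For $g\neq0$, $g^{\#}=g/\|g\|_2$. Algorithm AGMsDR (Euclidean case; input $x^0$, and $L$ for Option (a)): set $A_0=0$, $v^0=x^0$, $\psi_0(x)=\frac12\|x-x^0\|_2^2$. For $k=0,1,2,\dots$: 1. Choose $\beta_k\in\arg\min_{\beta\in[0,1]} f(v^k+\beta(x^k-v^k))$ and set $y^k=v^k+\beta_k(x^k-v^k)$. 2. Option (a): $x^{k+1}=y^k-\frac1L\nabla f(y^k)$, and $a_{k+1}>0$ solves $\frac{a_{k+1}^2}{A_k+a_{k+1}}=\frac1L$. Option (b): $h_{k+1}\in\arg\min_{h\ge0}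 f(y^k-h(\nabla f(y^k))^{\#})$, $x^{k+1}=y^k-h_{k+1}(\nabla f(y^k))^{\#}$, and $a_{k+1}$ is the largest solution of $f(y^k)-\frac{a_{k+1}^2}{2(A_k+a_{k+1})}\|\nabla f(y^k)\|_2^2=f(x^{k+1})$. 3. $A_{k+1}=A_k+a_{k+1}$; $\psi_{k+1}(x)=\psi_k(x)+a_{k+1}\{f(y^k)+\langle\nabla f(y^k),x-y^k\rangle\}$; $v^{k+1}=\arg\min_{x}\psi_{k+1}(x)$. All minima are assumed attained and $\nabla f(y^k)\ne0$ for all iterations considered. *)

(* Defs.v *)
From mathcomp Require Import all_boot.
From Stdlib Require Import Reals.
Open Scope R_scope.

Definition vec (n : nat) := 'I_n -> R.

Definition vzero {n} : vec n := fun _ => 0.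
Definition vadd {n} (x y : vec n) : vec n := fun i => x i + y i.
Definition vsub {n} (x y : vec n) : vec n := fun i => x i - y i.
Definition vscale {n} (c : R) (x : vec n) : vec n := fun i => c * x i.

Definition dot {n} (x y : vec n) : R := \big[Rplus/0]_(i < n) (x i * y i).
Definition norm2 {n} (x : vec n) : R := sqrt (dot x x).

Definition is_gradient {n} (f : vec n -> R) (g : vec n -> vec n) : Prop :=
  forall x eps, 0 < eps -> exists delta, 0 < delta /\
    forall h, norm2 h < delta ->
      Rabs (f (vadd x h) - f x - dot (g x) h) <= eps * norm2 h.

(* f is L-smooth with gradient g: differentiable with L-Lipschitz gradient
   (continuity of the gradient follows from the Lipschitz condition). *)
Definition L_smooth {n} (L : R) (f : vec n -> R) (g : vec n -> vec n) : Prop :=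
  0 < L /\ is_gradient f g /\
  forall x y, norm2 (vsub (g x) (g y)) <= L * norm2 (vsub x y).

Definition convex {n} (f : vec n -> R) : Prop :=
  forall x y t, 0 <= t <= 1 ->
    f (vadd (vscale t x) (vscale (1 - t) y)) <= t * f x + (1 - t) * f y.

Definition normalize {n} (g : vec n) : vec n := vscale (/ norm2 g) g.

Definition lin_model {n} (f : vec n -> R) (g : vec n -> vec n) (yi z : vec n) : R :=
  f yi + dot (g yi) (vsub z yi).

Definition psi {n} (f : vec n -> R) (g : vec n -> vec n) (x0 : vec n)
  (a : nat -> R) (y : nat -> vec n) (k : nat) (z : vec n) : R :=
  / 2 * (norm2 (vsub z x0)) ^ 2 +
  \big[Rplus/0]_(i < k) (a i.+1 * lin_model f g (y i) z).

(* The iterates (x, v, y, beta, h, a, A) follow Algorithm AGMsDR,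
   Option (a) if opt_a = true, Option (b) if opt_a = false. *)
Definition AGMsDR_run {n} (f : vec n -> R) (g : vec n -> vec n) (L : R)
  (x0 : vec n) (opt_a : bool)
  (x v y : nat -> vec n) (beta h a A : nat -> R) : Prop :=
  x 0%nat = x0 /\ v 0%nat = x0 /\ A 0%nat = 0 /\
  forall k : nat,
    (0 <= beta k <= 1 /\
     (forall b, 0 <= b <= 1 ->
        f (vadd (v k) (vscale (beta k) (vsub (x k) (v k))))
        <= f (vadd (v k) (vscale b (vsub (x k) (v k))))) /\
     y k = vadd (v k) (vscale (beta k) (vsub (x k) (v k)))) /\
    (if opt_a then
       x k.+1 = vsub (y k) (vscale (/ L) (g (y k))) /\
       0 < a k.+1 /\ (a k.+1) ^ 2 / (A k + a k.+1) = / L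
     else
       0 <= h k.+1 /\
       (forall h', 0 <= h' ->
          f (vsub (y k) (vscale (h k.+1) (normalize (g (y k)))))
          <= f (vsub (y k) (vscale h' (normalize (g (y k)))))) /\
       x k.+1 = vsub (y k) (vscale (h k.+1) (normalize (g (y k)))) /\
       A k + a k.+1 <> 0 /\
       f (y k) - (a k.+1) ^ 2 / (2 * (A k + a k.+1)) * (norm2 (g (y k))) ^ 2
         = f (x k.+1) /\
       (forall a', A k + a' <> 0 ->
          f (y k) - a' ^ 2 / (2 * (A k + a')) * (norm2 (g (y k))) ^ 2
            = f (x k.+1) -> a' <= a k.+1)) /\
    A k.+1 = A k + a k.+1 /\
    (forall z, psi f g x0 a y k.+1 (v k.+1) <= psi f g x0 a y k.+1 z).

Definition avg_model {n} (f : vec n -> R) (g : vec n -> vec n)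
  (a A : nat -> R) (y : nat -> vec n) (k : nat) (z : vec n) : R :=
  / A k * \big[Rplus/0]_(i < k) (a i.+1 * lin_model f g (y i) z).

Definition is_min_on_ball {n} (phi : vec n -> R) (c : vec n) (r m : R) : Prop :=
  (exists z, norm2 (vsub z c) <= r /\ phi z = m) /\
  (forall z, norm2 (vsub z c) <= r -> m <= phi z).

(* Main.v *)
Require Import Defs.
From HB Require Import structures.
From mathcomp Require Import all_boot.
From Stdlib Require Import Reals Lra FunctionalExtensionality.
Open Scope R_scope.
Lemma Rplus_assoc' : associative Rplus. Proof. intros x y z; ring. Qed.
Lemma Rplus_comm' : commutative Rplus. Proof. intros x y; ring. Qed.
Lemma Rplus_0l' : left_id 0 Rplus. Proof. intros x; ring. Qed.
HB.instance Definition _ := Monoid.isComLaw.Build R 0 Rplus Rplus_assoc' Rplus_comm' Rplus_0l'.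

Section Vec.
Context {n : nat}.
Implicit Types x y z u w p q : vec n.

Lemma sum_add m (F G : 'I_m -> R) : \big[Rplus/0]_(i<m) (F i + G i) = \big[Rplus/0]_(i<m) F i + \big[Rplus/0]_(i<m) G i.
Proof. by rewrite big_split. Qed.

Lemma sum_scal m c (F : 'I_m -> R) : \big[Rplus/0]_(i<m) (c * F i) = c * \big[Rplus/0]_(i<m) F i.
Proof.
symmetry. apply: (big_morph (fun s => c * s)). intros a b; ring. ring.
Qed.

Lemma sum_le m (F G : 'I_m -> R) : (forall i, F i <= G i) -> \big[Rplus/0]_(i<m) F i <= \big[Rplus/0]_(i<m) G i.
Proof.
intros H. apply: (big_ind2 (fun a b => a <= b)). lra. intros; lra. intros i _; apply H.
Qed.

Lemma sum_ext m (F G : 'I_m -> R) : (forall i, F i = G i) -> \big[Rplus/0]_(i<m) F i = \big[Rplus/0]_(i<m) G i.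
Proof. intros H; apply eq_bigr => i _; apply H. Qed.

Lemma dot_addl x y z : dot (vadd x y) z = dot x z + dot y z.
Proof. unfold dot, vadd. rewrite -sum_add. apply sum_ext => i; ring. Qed.
Lemma dot_subl x y z : dot (vsub x y) z = dot x z - dot y z.
Proof. transitivity (dot x z + (-1) * dot y z); last ring.
unfold dot, vsub. rewrite -sum_scal -sum_add. apply sum_ext => i; ring. Qed.
Lemma dot_scalel c x z : dot (vscale c x) z = c * dot x z.
Proof. unfold dot, vscale. rewrite -sum_scal. apply sum_ext => i; ring. Qed.
Lemma dot_sym x y : dot x y = dot y x.
Proof. unfold dot. apply sum_ext => i; ring. Qed.
Lemma dot_addr x y z : dot z (vadd x y) = dot z x + dot z y.
Proof. rewrite dot_sym dot_addl (dot_sym x) (dot_sym y). done. Qed.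
Lemma dot_subr x y z : dot z (vsub x y) = dot z x - dot z y.
Proof. rewrite dot_sym dot_subl (dot_sym x) (dot_sym y). done. Qed.
Lemma dot_scaler c x z : dot z (vscale c x) = c * dot z x.
Proof. rewrite dot_sym dot_scalel dot_sym. done. Qed.
Lemma dot_nonneg x : 0 <= dot x x.
Proof. unfold dot. apply: (big_ind (fun a => 0 <= a)). lra. intros; lra. intros i _; nra. Qed.
Lemma norm2_nonneg x : 0 <= norm2 x.
Proof. apply sqrt_pos. Qed.
Lemma norm2_sq x : norm2 x ^ 2 = dot x x.
Proof. unfold norm2. rewrite /= Rmult_1_r sqrt_sqrt //. apply dot_nonneg. Qed.
Lemma norm2_sq' x : norm2 x * norm2 x = dot x x.
Proof. unfold norm2. rewrite sqrt_sqrt //. apply dot_nonneg. Qed.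

Lemma CS_sq x y : dot x y * dot x y <= dot x x * dot y y.
Proof.
set a := dot x x; set b := dot x y; set c := dot y y.
have H : forall s t, 0 <= s*s*a - 2*s*t*b + t*t*c.
{ intros s t. have := dot_nonneg (vsub (vscale s x) (vscale t y)).
  rewrite !dot_subl !dot_subr !dot_scalel !dot_scaler (dot_sym y x). rewrite /a /b /c. lra. }
have ha : 0 <= a by apply dot_nonneg.
have hc : 0 <= c by apply dot_nonneg.
destruct (Req_dec c 0) as [E|E].
- have h1 := H (b) ((a+1)/2). rewrite E in h1.
  destruct (Req_dec b 0) as [Eb|Eb]. rewrite Eb E. lra.
  have h2 := H 1 ((a+1)/(2*b)). rewrite E in h2.
  have : 2 * 1 * ((a + 1) / (2 * b)) * b = a + 1 by field.
  lra.
- have h2 := H c b. 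
  have : 0 <= c * (a*c - b*b) by nra.
  intros h3. have : 0 <= a*c - b*b.
  { apply (Rmult_le_reg_l c). lra. lra. }
  lra.
Qed.

Lemma CS x y : dot x y <= norm2 x * norm2 y.
Proof.
have h := CS_sq x y.
have hx := norm2_nonneg x. have hy := norm2_nonneg y.
rewrite -norm2_sq' -norm2_sq' in h.
have hp : 0 <= norm2 x * norm2 y by nra.
destruct (Rle_dec (dot x y) 0). lra. nra.
Qed.

Lemma CSabs x y : Rabs (dot x y) <= norm2 x * norm2 y.
Proof.
unfold Rabs. destruct (Rcase_abs (dot x y)). 
have := CS x (vscale (-1) y). rewrite dot_scaler.
have -> : norm2 (vscale (-1) y) = norm2 y.
{ unfold norm2. f_equal. rewrite dot_scalel dot_scaler. ring. }
lra. apply CS.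
Qed.

Lemma norm2_scale c x : norm2 (vscale c x) = Rabs c * norm2 x.
Proof.
unfold norm2. rewrite dot_scalel dot_scaler -Rmult_assoc sqrt_mult.
change (c*c) with (Rsqr c). rewrite sqrt_Rsqr_abs //. apply Rle_0_sqr. apply dot_nonneg.
Qed.

Lemma dot_sq_add x y : dot (vadd x y) (vadd x y) = dot x x + 2 * dot x y + dot y y.
Proof. rewrite !dot_addl !dot_addr (dot_sym y x). ring. Qed.

Lemma dot0_norm x : dot x x = 0 -> forall y, dot x y = 0.
Proof.
intros H y. have := CSabs x y. rewrite -norm2_sq' in H.
have : norm2 x = 0 by nra. intros ->. rewrite Rmult_0_l.
have := Rabs_pos (dot x y). unfold Rabs. destruct (Rcase_abs (dot x y)); lra.
Qed.

End Vec.


Lemma le_eps a b K : 0 <= K -> (forall e, 0 < e -> a <= b + e * K) -> a <= b.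
Proof.
intros HK H. destruct (Rle_dec a b) as [|Hn]; first done. exfalso.
have hp : 0 < (a - b) / (2*(K+1)) by apply Rdiv_lt_0_compat; lra.
have := H _ hp.
have : (a - b) / (2 * (K + 1)) * K < a - b.
{ apply (Rmult_lt_reg_r (2*(K+1))). lra.
  have -> : (a - b) / (2 * (K + 1)) * K * (2 * (K + 1)) = (a-b)*K by field; lra.
  nra. }
lra.
Qed.

Section An.
Variable n : nat.
Variable f : vec n -> R.
Variable g : vec n -> vec n.
Hypothesis Hg : is_gradient f g.

Lemma dir_approx y d eps : 0 < eps -> exists delta, 0 < delta /\
  forall t, 0 < t < delta -> Rabs (f (vadd y (vscale t d)) - f y - t * dot (g y) d) <= eps * t * norm2 d.
Proof.
intros He. destruct (Hg y eps He) as [d0 [Hd0 H]].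
have hn := norm2_nonneg d.
exists (d0 / (norm2 d + 1)). split. apply Rdiv_lt_0_compat; lra.
intros t [ht1 ht2].
have hnt : norm2 (vscale t d) = t * norm2 d.
{ rewrite norm2_scale Rabs_right //; lra. }
have : norm2 (vscale t d) < d0.
{ rewrite hnt. have : t * (norm2 d + 1) < d0.
  { apply (Rmult_lt_reg_r (/ (norm2 d + 1))). apply Rinv_0_lt_compat; lra.
    rewrite Rmult_assoc Rinv_r. lra. lra. }
  nra. }
move=> /H. rewrite dot_scaler hnt. intros h. lra.
Qed.

Lemma dir_nonneg y d tau : 0 < tau ->
  (forall t, 0 < t < tau -> f y <= f (vadd y (vscale t d))) -> 0 <= dot (g y) d.
Proof.
intros Ht H. apply (le_eps _ _ (norm2 d)). apply norm2_nonneg.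
intros e He. destruct (dir_approx y d e He) as [de [Hde H2]].
set t := Rmin (de/2) (tau/2).
have ht : 0 < t < de /\ t < tau.
{ unfold t, Rmin. destruct (Rle_dec (de/2) (tau/2)); lra. }
have := H2 t (conj (proj1 (proj1 ht)) (proj2 (proj1 ht))).
have := H t (conj (proj1 (proj1 ht)) (proj2 ht)).
intros h1 h2. have h3 := Rle_abs (f (vadd y (vscale t d)) - f y - t * dot (g y) d).
have : t * (- (e * norm2 d)) = - (e*t*norm2 d) by ring.
intros hh. have : t * (- (e * norm2 d)) <= t * dot (g y) d. { rewrite hh. clear hh. lra. }
intros h4. destruct ht as [[ht1 ht2] ht3]. apply Rmult_le_reg_l in h4; lra.
Qed.

Hypothesis Hc : convex f.

Lemma grad_ineq y z : f y + dot (g y) (vsub z y) <= f z.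
Proof.
set d := vsub z y.
have : dot (g y) d <= f z - f y; last lra.
apply (le_eps _ _ (norm2 d)). apply norm2_nonneg.
intros e He. destruct (dir_approx y d e He) as [de [Hde H2]].
set t := Rmin (de/2) (1/2).
have ht : 0 < t < de /\ t <= 1.
{ unfold t, Rmin. destruct (Rle_dec (de/2) (1/2)); lra. }
have := H2 t (proj1 ht).
have E : vadd y (vscale t d) = vadd (vscale t z) (vscale (1 - t) y).
{ apply functional_extensionality => i. rewrite /vadd /vscale /d /vsub. ring. }
have := Hc z y t (conj (Rlt_le _ _ (proj1 (proj1 ht))) (proj2 ht)).
rewrite -E. intros h1 h2. have h3 := Rle_abs (- (f (vadd y (vscale t d)) - f y - t * dot (g y) d)).
rewrite Rabs_Ropp in h3.
have : t * (f z - f y + e * norm2 d) = t * f z + (1-t)*f y - f y + e*t*norm2 d by ring.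
intros hh. have : t * dot (g y) d <= t * (f z - f y + e * norm2 d) by lra.
intros h4. destruct ht as [[ht1 ht2] ht3]. apply Rmult_le_reg_l in h4; lra.
Qed.

End An.


Section De.
Variable n : nat.
Variable f : vec n -> R.
Variable g : vec n -> vec n.
Variable L : R.
Hypothesis HL : L_smooth L f g.

Lemma line_deriv y h t :
  derivable_pt_lim (fun s => f (vadd y (vscale s h))) t (dot (g (vadd y (vscale t h))) h).
Proof.
destruct HL as [_ [Hg _]].
intros eps He. set p := vadd y (vscale t h).
have hn := norm2_nonneg h.
have He' : 0 < eps / (norm2 h + 1) by apply Rdiv_lt_0_compat; lra.
destruct (Hg p _ He') as [d0 [Hd0 H]].
have Hdp : 0 < d0 / (norm2 h + 1) by apply Rdiv_lt_0_compat; lra.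
exists (mkposreal _ Hdp). simpl. intros s Hs Hsd.
have E : vadd y (vscale (t + s) h) = vadd p (vscale s h).
{ apply functional_extensionality => i. rewrite /p /vadd /vscale. ring. }
rewrite E -/p.
have hk : norm2 (vscale s h) < d0.
{ rewrite norm2_scale. have : Rabs s * (norm2 h + 1) < d0.
  { apply (Rmult_lt_reg_r (/ (norm2 h + 1))). apply Rinv_0_lt_compat; lra.
    rewrite Rmult_assoc Rinv_r. lra. lra. }
  have := Rabs_pos s. nra. }
have := H _ hk. rewrite dot_scaler norm2_scale.
have hs : 0 < Rabs s by apply Rabs_pos_lt.
have -> : (f (vadd p (vscale s h)) - f p) / s - dot (g p) h
  = (f (vadd p (vscale s h)) - f p - s * dot (g p) h) / s by field.
rewrite /Rdiv Rabs_mult Rabs_inv => h1.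
apply (Rmult_lt_reg_r (Rabs s)); first done.
rewrite Rmult_assoc Rinv_l; last lra.
rewrite Rmult_1_r.
have : eps / (norm2 h + 1) * (Rabs s * norm2 h) < eps * Rabs s; last lra.
have : eps / (norm2 h + 1) * norm2 h < eps.
{ apply (Rmult_lt_reg_r (norm2 h + 1)). lra.
  have -> : eps / (norm2 h + 1) * norm2 h * (norm2 h + 1) = eps * norm2 h by field; lra.
  nra. }
intros. nra.
Qed.

Lemma descent y h : f (vadd y h) <= f y + dot (g y) h + L / 2 * dot h h.
Proof.
have [HL0 [_ Hlip]] := HL.
set c1 := dot (g y) h. set c2 := L / 2 * dot h h.
set F := fun s => f (vadd y (vscale s h)).
set phi := fun s => F s - c1 * s - c2 * (s * s).
set l := fun s => dot (g (vadd y (vscale s h))) h - c1 - c2 * (2 * s).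
have Hd : forall s, derivable_pt_lim phi s (l s).
{ intros s. rewrite /phi /l.
  have E : (fun s0 => F s0 - c1 * s0 - c2 * (s0 * s0)) =
     ((F - mult_real_fct c1 id) - mult_real_fct c2 (id * id))%F.
  { apply functional_extensionality => z. rewrite /minus_fct /mult_real_fct /mult_fct /id. done. }
  rewrite E.
  have -> : dot (g (vadd y (vscale s h))) h - c1 - c2 * (2 * s)
     = (dot (g (vadd y (vscale s h))) h - c1 * 1) - c2 * (1 * id s + id s * 1) by rewrite /id; ring.
  apply derivable_pt_lim_minus. apply derivable_pt_lim_minus. apply line_deriv.
  apply derivable_pt_lim_scal. apply derivable_pt_lim_id.
  apply derivable_pt_lim_scal. apply derivable_pt_lim_mult; apply derivable_pt_lim_id. }
set pr := (fun s => exist _ (l s) (Hd s)) : derivable phi.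
have [c [Hc Hc01]] := MVT_cor1 phi 0 1 pr Rlt_0_1.
have Hl : derive_pt phi c (pr c) <= 0.
{ change (derive_pt phi c (pr c)) with (l c). rewrite /l.
  set p := vadd y (vscale c h).
  have E1 : dot (g p) h - c1 = dot (vsub (g p) (g y)) h by rewrite dot_subl.
  have h1 := CS (vsub (g p) (g y)) h.
  have h2 := Hlip p y.
  have E2 : vsub p y = vscale c h.
  { apply functional_extensionality => i. rewrite /p /vsub /vadd /vscale. ring. }
  rewrite E2 norm2_scale Rabs_right in h2; last lra.
  have hn := norm2_nonneg h. have hn2 := norm2_nonneg (vsub (g p) (g y)).
  have h3 : norm2 (vsub (g p) (g y)) * norm2 h <= L * (c * norm2 h) * norm2 h by nra.
  rewrite E1 /c2 -norm2_sq'. nra. }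
have E0 : vadd y (vscale 0 h) = y.
{ apply functional_extensionality => i. rewrite /vadd /vscale. ring. }
have E1' : vadd y (vscale 1 h) = vadd y h.
{ apply functional_extensionality => i. rewrite /vadd /vscale. ring. }
set D := derive_pt phi c (pr c) in Hc Hl.
move: Hc. rewrite /phi /F E0 E1'. nra.
Qed.

End De.


Section Main.
Variable n : nat.
Variable f : vec n -> R.
Variable g : vec n -> vec n.
Variable L : R.
Variables x0 : vec n.
Variable opt_a : bool.
Variables x v y : nat -> vec n.
Variables beta h a A : nat -> R.
Hypothesis HL : L_smooth L f g.
Hypothesis Hc : convex f.
Hypothesis Hrun : AGMsDR_run f g L x0 opt_a x v y beta h a A.

Definition Tk k : vec n := fun j => \big[Rplus/0]_(i<k) (a i.+1 * g (y i) j).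

Lemma sum_dot k (G : nat -> vec n) w :
  \big[Rplus/0]_(i<k) (a i.+1 * dot (G i) w) =
  dot (fun j => \big[Rplus/0]_(i<k) (a i.+1 * G i j)) w.
Proof.
unfold dot.
transitivity (\big[Rplus/0]_(j<n) \big[Rplus/0]_(i<k) (a i.+1 * G i j * w j)).
- rewrite exchange_big. apply sum_ext => i. rewrite -sum_scal. apply sum_ext => j. ring.
- apply sum_ext => j. rewrite Rmult_comm -sum_scal. apply sum_ext => i. ring.
Qed.

Lemma lin_affine k (z p : vec n) :
  \big[Rplus/0]_(i<k) (a i.+1 * lin_model f g (y i) z) =
  \big[Rplus/0]_(i<k) (a i.+1 * lin_model f g (y i) p) + dot (Tk k) (vsub z p).
Proof.
rewrite -[dot (Tk k) _](sum_dot k (fun i => g (y i))) -sum_add. apply sum_ext => i.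
rewrite /lin_model !dot_subr. ring.
Qed.

Lemma dot_vsub_self (p w : vec n) : dot (vsub p p) w = 0.
Proof. rewrite dot_subl. ring. Qed.

Lemma psi_expand k (p z : vec n) :
  psi f g x0 a y k z = psi f g x0 a y k p + / 2 * dot (vsub z p) (vsub z p)
     + dot (vadd (vsub p x0) (Tk k)) (vsub z p).
Proof.
rewrite /psi !norm2_sq (lin_affine k z p).
have -> : vsub z x0 = vadd (vsub z p) (vsub p x0).
{ apply functional_extensionality => i. rewrite /vsub /vadd. ring. }
rewrite dot_sq_add dot_addl (dot_sym (vsub z p)). lra.
Qed.

Lemma quad_lower k (p : vec n) : (forall z, psi f g x0 a y k p <= psi f g x0 a y k z) ->
  forall z, psi f g x0 a y k p + / 2 * dot (vsub z p) (vsub z p) <= psi f g x0 a y k z.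
Proof.
intros Hm z. set u := vadd (vsub p x0) (Tk k).
have Hu : dot u u = 0.
{ have := Hm (vsub p u). rewrite (psi_expand k p (vsub p u)) -/u.
  have -> : vsub (vsub p u) p = vscale (-1) u.
  { apply functional_extensionality => i. rewrite /vsub /vscale. ring. }
  rewrite !dot_scalel !dot_scaler. have := dot_nonneg u. lra. }
rewrite (psi_expand k p z) -/u (dot0_norm u Hu). lra.
Qed.

Lemma psi_S k (z : vec n) : psi f g x0 a y k.+1 z = psi f g x0 a y k z + a k.+1 * lin_model f g (y k) z.
Proof. rewrite /psi big_ord_recr /=. ring. Qed.

Lemma A_sum k : A k = \big[Rplus/0]_(i<k) a i.+1.
Proof.
have [_ [_ [HA0 Hk]]] := Hrun.
elim: k => [|k IH]. by rewrite big_ord0.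
rewrite big_ord_recr /= -IH. by have [_ [_ [-> _]]] := Hk k.
Qed.

Lemma linesearch (vv xx : vec n) bb :
  0 <= bb <= 1 ->
  (forall b, 0 <= b <= 1 -> f (vadd vv (vscale bb (vsub xx vv))) <= f (vadd vv (vscale b (vsub xx vv)))) ->
  let yy := vadd vv (vscale bb (vsub xx vv)) in
  0 <= dot (g yy) (vsub xx yy) /\ 0 <= dot (g yy) (vsub vv yy).
Proof.
intros Hb Hm yy. have [_ [Hg _]] := HL.
set d := vsub xx vv.
have E1 : vsub xx yy = vscale (1 - bb) d.
{ apply functional_extensionality => i. rewrite /yy /d /vsub /vadd /vscale. ring. }
have E2 : vsub vv yy = vscale (- bb) d.
{ apply functional_extensionality => i. rewrite /yy /d /vsub /vadd /vscale. ring. }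
rewrite E1 E2 !dot_scaler.
have D1 : bb < 1 -> 0 <= dot (g yy) d.
{ intros hb. apply (dir_nonneg n f g Hg yy d (1 - bb)). lra.
  intros t ht. have -> : vadd yy (vscale t d) = vadd vv (vscale (bb + t) d).
  { apply functional_extensionality => i. rewrite /yy /d /vsub /vadd /vscale. ring. }
  apply Hm. lra. }
have D2 : 0 < bb -> dot (g yy) d <= 0.
{ intros hb. have := dir_nonneg n f g Hg yy (vscale (-1) d) bb hb.
  rewrite dot_scaler. intros H; enough (0 <= -1 * dot (g yy) d) by lra. apply H.
  intros t ht. have -> : vadd yy (vscale t (vscale (-1) d)) = vadd vv (vscale (bb - t) d).
  { apply functional_extensionality => i. rewrite /yy /d /vsub /vadd /vscale. ring. }
  apply Hm. lra. }
split.
- destruct (Req_dec bb 1) as [->|hb]. lra. apply Rmult_le_pos. lra. apply D1. lra.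
- destruct (Req_dec bb 0) as [->|hb]. lra. have := D2 ltac:(lra). nra.
Qed.


Lemma a_step k : 0 <= A k -> 0 <= a k.+1 /\ A k + a k.+1 <> 0 /\
  (A k + a k.+1) * f (x k.+1) <= (A k + a k.+1) * f (y k) - a k.+1 ^ 2 / 2 * dot (g (y k)) (g (y k)).
Proof.
intros HA. have [HL0 _] := HL.
have [_ [_ [_ Hk]]] := Hrun. have [_ [H2 _]] := Hk k. clear Hk.
set yk := y k in H2 *. set gk := g yk in H2 *. set ak := a k.+1 in H2 *. set Ak := A k in HA H2 *.
have HG := dot_nonneg gk.
destruct opt_a.
- destruct H2 as [Hx [Hpos Heq]].
  have HS : 0 < Ak + ak by lra.
  have Ea : ak ^ 2 = / L * (Ak + ak).
  { rewrite -Heq. field. lra. }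
  have Hd := descent n f g L HL yk (vscale (- / L) gk).
  have Ex : vadd yk (vscale (- / L) gk) = x k.+1.
  { rewrite Hx. apply functional_extensionality => i. rewrite /vadd /vsub /vscale. ring. }
  rewrite Ex !dot_scalel !dot_scaler -/gk in Hd.
  have E2 : f yk + - / L * dot gk gk + L / 2 * (- / L * (- / L * dot gk gk)) = f yk - / L / 2 * dot gk gk.
  { field. lra. }
  rewrite E2 in Hd.
  split; [lra|split; [intro; lra|]].
  rewrite Ea.
  have : (Ak + ak) * f (x k.+1) <= (Ak + ak) * (f yk - / L / 2 * dot gk gk).
  { apply Rmult_le_compat_l; lra. }
  intros H3. have -> : / L * (Ak + ak) / 2 * dot gk gk = (Ak + ak) * (/ L / 2 * dot gk gk) by field; lra.
  lra.
- destruct H2 as [Hh [Hmin [Hx [Hne [Heq Hmax]]]]].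
  rewrite norm2_sq -/gk in Heq Hmax.
  have Hx1 : f (x k.+1) <= f yk.
  { rewrite Hx. have := Hmin 0 (Rle_refl 0).
    have -> : vsub yk (vscale 0 (normalize gk)) = yk.
    { apply functional_extensionality => i. rewrite /vsub /vscale. ring. }
    done. }
  have Hnn : 0 <= ak.
  { destruct (Req_dec (dot gk gk) 0) as [E0|E0].
    - exfalso. have := Hmax (Rabs ak + 1).
      have := Rle_abs ak. have := Rabs_pos ak. intros h1 h2 H.
      have : Rabs ak + 1 <= ak; last lra.
      apply H. lra. rewrite E0 Rmult_0_r Rminus_0_r. rewrite E0 Rmult_0_r Rminus_0_r in Heq. done.
    - have HGp : 0 < dot gk gk by lra.
      set c := ak ^ 2 / (2 * (Ak + ak)).
      have Hc0 : 0 <= c.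
      { destruct (Rle_dec 0 c) as [|hc]; first done. exfalso.
        have : c * dot gk gk < 0 by nra. rewrite /c. lra. }
      have Eak : ak ^ 2 = 2 * (Ak + ak) * c by rewrite /c; field.
      destruct (Req_dec c 0) as [Ec|Ec].
      + rewrite Ec Rmult_0_r in Eak. have : ak = 0 by nra. lra.
      + have Hcp : 0 < c by lra.
        set s := sqrt (c ^ 2 + 2 * c * Ak).
        have Hs0 : 0 <= s by apply sqrt_pos.
        have Hss : s * s = c ^ 2 + 2 * c * Ak.
        { rewrite /s sqrt_sqrt //. nra. }
        have Hne' : Ak + (c + s) <> 0 by (intro; lra).
        have : c + s <= ak; last lra.
        apply Hmax. done.
        have -> : (c + s) ^ 2 / (2 * (Ak + (c + s))) = c.
        { have Hsq : (c + s) ^ 2 = 2 * (Ak + (c + s)) * c by nra.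
          rewrite Hsq. field. done. }
        rewrite -Heq. done. }
  split; first done. split; first done.
  rewrite -Heq. have : ak ^ 2 / (2 * (Ak + ak)) * dot gk gk * (Ak + ak) = ak ^ 2 / 2 * dot gk gk by field.
  nra.
Qed.


Lemma A_nonneg k : 0 <= A k.
Proof.
elim: k => [|k IH].
- have [_ [_ [-> _]]] := Hrun. lra.
- have [_ [_ [_ Hk]]] := Hrun. have [_ [_ [-> _]]] := Hk k.
  have [h1 _] := a_step k IH. lra.
Qed.

Lemma A_pos k : 0 < A k.+1.
Proof.
have [_ [_ [_ Hk]]] := Hrun. have [_ [_ [-> _]]] := Hk k.
have H0 := A_nonneg k.
have [h1 [h2 _]] := a_step k H0.
destruct (Rle_lt_or_eq_dec 0 (A k + a k.+1)); [lra | |lra]. done. 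
Qed.

Lemma psi0_nonneg z : 0 <= psi f g x0 a y 0 z.
Proof. rewrite /psi big_ord0. have := pow2_ge_0 (norm2 (vsub z x0)). lra. Qed.

Lemma vmin k : forall z, psi f g x0 a y k (v k) <= psi f g x0 a y k z.
Proof.
case: k => [|k].
- have [_ [Hv0 _]] := Hrun. rewrite Hv0 => z.
  have -> : psi f g x0 a y 0 x0 = 0.
  { rewrite /psi big_ord0 norm2_sq dot_vsub_self. ring. }
  apply psi0_nonneg.
- have [_ [_ [_ Hk]]] := Hrun. by have [_ [_ [_ H]]] := Hk k.
Qed.

Lemma inv k : A k * f (x k) <= psi f g x0 a y k (v k).
Proof.
elim: k => [|k IH].
- have [_ [_ [-> _]]] := Hrun. rewrite Rmult_0_l. apply psi0_nonneg.
- have HA := A_nonneg k.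
  have [Ha [_ Hdesc]] := a_step k HA.
  have [_ [_ [_ Hk]]] := Hrun. have [[Hb [Hbm Hy]] [_ [HAk _]]] := Hk k.
  have [LS1 LS2] := linesearch (v k) (x k) (beta k) Hb Hbm.
  rewrite -Hy in LS1 LS2.
  rewrite HAk psi_S.
  set w := v k.+1. set yk := y k in Hdesc LS1 LS2 *. set gk := g yk in Hdesc LS1 LS2 *. set ak := a k.+1 in Hdesc Ha *.
  have Q := quad_lower k (v k) (vmin k) w.
  have Gi := grad_ineq n f g (proj1 (proj2 HL)) Hc yk (x k).
  have Nn := dot_nonneg (vadd (vsub w (v k)) (vscale ak gk)).
  rewrite dot_sq_add dot_scaler dot_scalel dot_scaler (dot_sym (vsub w (v k))) in Nn.
  have Elin : lin_model f g yk w = f yk + dot gk (vsub w (v k)) + dot gk (vsub (v k) yk).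
  { rewrite /lin_model -/gk !dot_subr. lra. }
  rewrite Elin.
  have P1 : 0 <= ak * dot gk (vsub (v k) yk) by apply Rmult_le_pos.
  have P2 : A k * (f yk + dot gk (vsub (x k) yk)) <= A k * f (x k) by apply Rmult_le_compat_l.
  have P3 : 0 <= A k * dot gk (vsub (x k) yk) by apply Rmult_le_pos.
  clearbody w yk gk ak.
  nra.
Qed.


Lemma final (xs : vec n) : (forall z, f xs <= f z) -> forall k,
  exists fhat,
    is_min_on_ball (avg_model f g a A y k.+1) x0 (norm2 (vsub x0 xs)) fhat /\
    fhat <= f xs /\
    f (x k.+1) - fhat <= (norm2 (vsub x0 xs)) ^ 2 / (2 * A k.+1) /\
    f (x k.+1) - f xs <= f (x k.+1) - fhat.
Proof.
intros Hxs k.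
set K := k.+1.
have HAK : 0 < A K := A_pos k.
set R0 := norm2 (vsub x0 xs).
have HR0 : 0 <= R0 by apply norm2_nonneg.
set phi := avg_model f g a A y K.
set S := vscale (/ A K) (Tk K).
set N := norm2 S.
have HN : 0 <= N by apply norm2_nonneg.
have Aff : forall z, phi z = phi x0 + dot S (vsub z x0).
{ intros z. rewrite /phi /avg_model (lin_affine K z x0) /S dot_scalel. lra. }
have Low : forall z, norm2 (vsub z x0) <= R0 -> phi x0 - R0 * N <= phi z.
{ intros z Hz. rewrite (Aff z). have := CSabs S (vsub z x0). rewrite -/N.
  have := Rle_abs (- dot S (vsub z x0)). rewrite Rabs_Ropp.
  have := norm2_nonneg (vsub z x0). nra. }
set fhat := phi x0 - R0 * N.
have [zs [Hzs1 Hzs2]] : exists zs, norm2 (vsub zs x0) <= R0 /\ phi zs = fhat.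
{ destruct (Req_dec N 0) as [E|E].
  - exists x0. split.
    + rewrite /norm2 dot_vsub_self sqrt_0. done.
    + rewrite /fhat E. ring.
  - exists (vsub x0 (vscale (R0 / N) S)).
    have Ev : vsub (vsub x0 (vscale (R0 / N) S)) x0 = vscale (- (R0 / N)) S.
    { apply functional_extensionality => i. rewrite /vsub /vscale. ring. }
    have HNp : 0 < N by lra.
    split.
    + rewrite Ev norm2_scale Rabs_Ropp Rabs_right. rewrite -/N. right. field. lra.
      apply Rle_ge. apply Rmult_le_pos. lra. left. apply Rinv_0_lt_compat. lra.
    + rewrite Aff Ev dot_scaler -norm2_sq' -/N /fhat. field. lra. }
have Hball : norm2 (vsub xs x0) <= R0.
{ have -> : vsub xs x0 = vscale (-1) (vsub x0 xs).
  { apply functional_extensionality => i. rewrite /vsub /vscale. ring. }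
  rewrite norm2_scale Rabs_Ropp Rabs_R1 -/R0. lra. }
have Hle : fhat <= f xs.
{ apply (Rle_trans _ (phi xs)). apply Low. done.
  rewrite /phi /avg_model.
  have : \big[Rplus/0]_(i<K) (a i.+1 * lin_model f g (y i) xs) <= A K * f xs.
  { rewrite A_sum.
    have -> : \big[Rplus/0]_(i<K) a i.+1 * f xs = \big[Rplus/0]_(i<K) (f xs * a i.+1).
    { rewrite Rmult_comm -sum_scal. done. }
    apply sum_le => i. rewrite (Rmult_comm (f xs)). apply Rmult_le_compat_l.
    - have [h1 _] := a_step i (A_nonneg i). done.
    - rewrite /lin_model. apply (grad_ineq n f g (proj1 (proj2 HL)) Hc). }
  intros H. apply (Rmult_le_reg_l (A K)). done.
  rewrite -Rmult_assoc Rinv_r. lra. lra. }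
exists fhat. split; [split|split; [done|split]].
- exists zs. done.
- intros z Hz. apply Low. done.
- have H1 := inv K. have H2 := vmin K zs.
  have E : psi f g x0 a y K zs = / 2 * norm2 (vsub zs x0) ^ 2 + A K * phi zs.
  { rewrite /psi /phi /avg_model. have hh : forall s, A K * (/ A K * s) = s by intros; field; lra. by rewrite hh. }
  rewrite Hzs2 in E.
  have Hsq : norm2 (vsub zs x0) ^ 2 <= R0 ^ 2.
  { have := norm2_nonneg (vsub zs x0). nra. }
  apply (Rmult_le_reg_l (A K)). done.
  have -> : A K * (R0 ^ 2 / (2 * A K)) = R0 ^ 2 / 2 by field; lra.
  nra.
- lra.
Qed.

End Main.

Theorem mainTheorem5 (n : nat) (f : vec n -> R) (g : vec n -> vec n) (L : R)
  (x0 xs : vec n) (opt_a : bool)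
  (x v y : nat -> vec n) (beta h a A : nat -> R) :
  L_smooth L f g ->
  convex f ->
  (forall z, f xs <= f z) ->
  AGMsDR_run f g L x0 opt_a x v y beta h a A ->
  (forall k, g (y k) <> vzero) ->
  forall k : nat, (1 <= k)%nat ->
  exists fhat,
    is_min_on_ball (avg_model f g a A y k) x0 (norm2 (vsub x0 xs)) fhat /\
    fhat <= f xs /\
    f (x k) - fhat <= (norm2 (vsub x0 xs)) ^ 2 / (2 * A k) /\
    f (x k) - f xs <= f (x k) - fhat.
Proof.
intros HL Hc Hxs Hrun _ k Hk.
case: k Hk => [|k] Hk. done.
exact: (final n f g L x0 opt_a x v y beta h a A HL Hc Hrun xs Hxs k).
Qed.
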